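(* Let $\mathcal{H}$ be a Hilbert space and $T\in\mathcal{B}(\mathcal{H})$ a convex operator, i.e. $T^{*2}T^2-2T^*T+I\ge0$. The following are equivalent: (i) $T$ has a $2$-isometric lifting; (ii) $T$ has a $2$-isometric lifting $S\in\mathcal{B}(\mathcal{K})$ with $\mathcal{K}\ominus\mathcal{H}\subset\operatorname{Ker}(S^*S-I)$; (iii) $\sup_{n\ge0}\frac{\|T^n\|^2}{n+1}<\infty$.
   Context: If $\mathcal{H}$ is a closed subspace of a Hilbert space $\mathcal{K}$ with orthogonal projection $P_{\mathcal{H}}$, an operator $S\in\mathcal{B}(\mathcal{K})$ is a lifting of $T\in\mathcal{B}(\mathcal{H})$ if $TP_{\mathcal{H}}=P_{\mathcal{H}}S$ (up to unitary identification of $\mathcal{H}$ with a subspace of $\mathcal{K}$). $S$ is a $2$-isometry if $S^{*2}S^2-2S^*S+I=0$. *)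

(* Defs.v *)
From HB Require Import structures.
From mathcomp Require Import all_boot all_order all_algebra.
From mathcomp Require Import boolp classical_sets reals.
From mathcomp Require Import complex.
Set Implicit Arguments. Unset Strict Implicit. Unset Printing Implicit Defensive.
Import Order.TTheory GRing.Theory Num.Theory.
Local Open Scope ring_scope.
Local Open Scope classical_set_scope.

(* The inner product is linear in the first argument and conjugate      *)
(* linear in the second.                                                *)

Record hilbert (R : realType) := Hilbert {
  hcarrier :> lmodType R[i];
  hinner : hcarrier -> hcarrier -> R[i];
  hinnerDl : forall (a : R[i]) (x y z : hcarrier),
    hinner (a *: x + y) z = a * hinner x z + hinner y z;
  hinner_conj : forall x y : hcarrier, hinner y x = conjc (hinner x y);
  hinner_ge0 : forall x : hcarrier, 0 <= hinner x x;
  hinner_eq0 : forall x : hcarrier, hinner x x = 0 -> x = 0;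
  hcomplete : forall u : nat -> hcarrier,
    (forall e : R, 0 < e -> exists N, forall m n, (N <= m)%N -> (N <= n)%N ->
        Num.sqrt (complex.Re (hinner (u m - u n) (u m - u n))) < e) ->
    exists l : hcarrier, forall e : R, 0 < e -> exists N, forall n, (N <= n)%N ->
        Num.sqrt (complex.Re (hinner (u n - l) (u n - l))) < e
}.

Arguments hinner {R} h _ _.

Notation "[< x , y >]" := (hinner _ x y) (format "[<  x ,  y  >]").

Definition hnorm {R : realType} {H : hilbert R} (x : H) : R :=
  Num.sqrt (complex.Re (hinner H x x)).

Definition is_linear {R : realType} {H1 H2 : hilbert R} (f : H1 -> H2) :=
  forall (a : R[i]) (x y : H1), f (a *: x + y) = a *: f x + f y.

Definition is_bounded {R : realType} {H1 H2 : hilbert R} (f : H1 -> H2) :=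
  exists M : R, forall x : H1, hnorm (f x) <= M * hnorm x.

Record bop {R : realType} (H1 H2 : hilbert R) := Bop {
  bop_fun :> H1 -> H2;
  bop_linear : is_linear bop_fun;
  bop_bounded : is_bounded bop_fun
}.

Definition is_adjoint {R : realType} {H1 H2 : hilbert R}
  (A : H1 -> H2) (S : H2 -> H1) :=
  forall (x : H1) (y : H2), hinner H2 (A x) y = hinner H1 x (S y).

(* The adjoint A^* (it exists and is unique for bounded A; we pick it by
   choice, defaulting to 0 if no adjoint exists). *)
Definition adjoint {R : realType} {H1 H2 : hilbert R} (A : H1 -> H2) : H2 -> H1 :=
  match pselect (exists S, is_adjoint A S) with
  | left e => projT1 (cid e)
  | right _ => fun _ => 0
  end.

Definition opnorm {R : realType} {H1 H2 : hilbert R} (A : H1 -> H2) : R :=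
  sup [set hnorm (A x) | x in [set x : H1 | hnorm x <= 1]].

Definition positive_op {R : realType} {H : hilbert R} (A : H -> H) :=
  forall x : H, 0 <= hinner H (A x) x.

Definition convex_op {R : realType} {H : hilbert R} (T : H -> H) :=
  let Ts := adjoint T in
  positive_op (fun x => Ts (Ts (T (T x))) - 2%:R *: Ts (T x) + x).

Definition two_isometry {R : realType} {K : hilbert R} (S : K -> K) :=
  let Ss := adjoint S in
  forall x : K, Ss (Ss (S (S x))) - 2%:R *: Ss (S x) + x = 0.

(* J : H -> K is a linear isometric embedding (identifies H with the
   closed subspace range J of K). *)
Definition isometric_embedding {R : realType} {H K : hilbert R} (J : H -> K) :=
  is_linear J /\ forall x y : H, hinner K (J x) (J y) = hinner H x y.

(* S in B(K) is a lifting of T in B(H) w.r.t. the identification J: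
   T P_H = P_H S, where P_H = J J^* is the orthogonal projection onto
   range J, and T is transported to range J via J. *)
Definition lifting_via {R : realType} {H K : hilbert R}
  (J : H -> K) (T : H -> H) (S : K -> K) :=
  isometric_embedding J /\
  forall k : K, J (T (adjoint J k)) = J (adjoint J (S k)).

Definition orth_compl_in_ker {R : realType} {H K : hilbert R}
  (J : H -> K) (S : K -> K) :=
  forall k : K, (forall h : H, hinner K k (J h) = 0) ->
    adjoint S (S k) - k = 0.

(* Main.v *)
Require Import Defs.
From HB Require Import structures.
From mathcomp Require Import all_boot all_order all_algebra.
From mathcomp Require Import boolp classical_sets reals.
From mathcomp Require Import complex.
Import Order.TTheory GRing.Theory Num.Theory.
Local Open Scope ring_scope.
From mathcomp Require Import ring lra.

Module MT1.
Set Implicit Arguments. Unset Strict Implicit. Unset Printing Implicit Defensive.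
Local Open Scope ring_scope.
Local Open Scope complex_scope.

Notation cRe := complex.Re.
Notation cIm := complex.Im.
Section C.
Variable R : realType.
Lemma ReM (a b : R[i]) : cRe (a * b) = cRe a * cRe b - cIm a * cIm b.
Proof. by case: a => a1 a2; case: b => b1 b2; simpc. Qed.
Lemma ImM (a b : R[i]) : cIm (a * b) = cRe a * cIm b + cIm a * cRe b.
Proof. by case: a => a1 a2; case: b => b1 b2; simpc => /=; ring. Qed.
Lemma ReJ (a : R[i]) : cRe (conjc a) = cRe a. Proof. by case: a. Qed.
Lemma ImJ (a : R[i]) : cIm (conjc a) = - cIm a. Proof. by case: a. Qed.
Lemma ReD (a b : R[i]) : cRe (a + b) = cRe a + cRe b. Proof. by case: a; case: b. Qed.
Lemma ImD (a b : R[i]) : cIm (a + b) = cIm a + cIm b. Proof. by case: a; case: b. Qed.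
Lemma ReN (a : R[i]) : cRe (- a) = - cRe a. Proof. by case: a. Qed.
Lemma ImN (a : R[i]) : cIm (- a) = - cIm a. Proof. by case: a. Qed.
Lemma ReC (r : R) : cRe (r%:C) = r. Proof. by []. Qed.
Lemma ImC (r : R) : cIm (r%:C) = 0. Proof. by []. Qed.
Lemma Re0 : cRe (0 : R[i]) = 0. Proof. by []. Qed.
Lemma Im0 : cIm (0 : R[i]) = 0. Proof. by []. Qed.
Lemma Re1 : cRe (1 : R[i]) = 1. Proof. by []. Qed.
Lemma Im1 : cIm (1 : R[i]) = 0. Proof. by []. Qed.
Lemma Rei : cRe ('i : R[i]) = 0. Proof. by []. Qed.
Lemma Imi : cIm ('i : R[i]) = 1. Proof. by []. Qed.
Lemma complex_ext (a b : R[i]) : cRe a = cRe b -> cIm a = cIm b -> a = b.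
Proof. by case: a; case: b => /= ? ? ? ? -> ->. Qed.
Lemma Re_nat n : cRe (n%:R : R[i]) = n%:R.
Proof. elim: n => // n IH; rewrite !mulrS ReD IH. by []. Qed.
Lemma Im_nat n : cIm (n%:R : R[i]) = 0.
Proof. elim: n => // n IH; rewrite !mulrS ImD IH. by rewrite addr0. Qed.
End C.
Section C2.
Variable R : realType.
Lemma conjC_real (r : R) : conjc (r%:C) = r%:C.
Proof. by apply: complex_ext; rewrite ?ReJ ?ImJ /= ?oppr0. Qed.
End C2.
Section C3.
Variable R : realType.
Lemma conjC_nat n : conjc (n%:R : R[i]) = n%:R.
Proof. by apply: complex_ext; rewrite ?ReJ ?ImJ ?Re_nat ?Im_nat ?oppr0. Qed.
End C3.
Section C4.
Variable R : realType.
Lemma conj_form (A B C : R[i]) : conjc (A - 2%:R * B + C) = conjc A - 2%:R * conjc B + conjc C.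
Proof.
by apply: complex_ext; rewrite !(ReJ, ImJ, ReD, ImD, ReN, ImN, ReM, ImM, Re_nat, Im_nat); ring.
Qed.
End C4.

End MT1.
Import MT1.

Module MT2.
Set Implicit Arguments. Unset Strict Implicit. Unset Printing Implicit Defensive.
Local Open Scope ring_scope.
Local Open Scope complex_scope.

Lemma eq_self_add (V : zmodType) (x : V) : x = x + x -> x = 0.
Proof. by move=> e; apply: (addrI x); rewrite addr0 -e. Qed.

Lemma quad_disc (R : realFieldType) (a b c : R) :
  (forall t, 0 <= a + 2 * t * b + t ^+ 2 * c) -> 0 <= c -> b ^+ 2 <= a * c.
Proof.
move=> h c0; have a0 : 0 <= a by have := h 0; lra.
case: (ltrP 0 c) => cp.
  have := h (- b / c).
  have -> : a + 2 * (- b / c) * b + (- b / c) ^+ 2 * c = a - b ^+ 2 / c.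
    by field; rewrite gt_eqF.
  by rewrite subr_ge0 ler_pdivrMr // mulrC.
have c0' : c = 0 by apply/eqP; rewrite eq_le cp c0.
subst c; rewrite mulr0.
case: (eqVneq b 0) => [->|bn]; first by rewrite expr0n.
have := h (- (a + 1) / (2 * b)).
have -> : a + 2 * (- (a + 1) / (2 * b)) * b + (- (a + 1) / (2 * b)) ^+ 2 * 0 = -1.
  by field.
lra.
Qed.

Section Hilb.
Variable R : realType.
Variable H : hilbert R.
Local Notation ip := (hinner H).
Implicit Types (x y z : H) (a : R[i]).

Lemma ip0l z : ip 0 z = 0.
Proof. apply: eq_self_add; have := @hinnerDl _ H 1 0 0 z. by rewrite scale1r addr0 mul1r. Qed.
Lemma ipDl x y z : ip (x + y) z = ip x z + ip y z.
Proof. by have := @hinnerDl _ H 1 x y z; rewrite scale1r mul1r. Qed.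
Lemma ipZl a x z : ip (a *: x) z = a * ip x z.
Proof. by have := @hinnerDl _ H a x 0 z; rewrite addr0 ip0l addr0. Qed.
Lemma ipNl x z : ip (- x) z = - ip x z.
Proof. by rewrite -scaleN1r ipZl mulN1r. Qed.
Lemma ipBl x y z : ip (x - y) z = ip x z - ip y z.
Proof. by rewrite ipDl ipNl. Qed.
Lemma ipC x y : ip y x = conjc (ip x y).
Proof. exact: hinner_conj. Qed.
Lemma ipDr x y z : ip z (x + y) = ip z x + ip z y.
Proof. by rewrite ipC ipDl rmorphD /= -!ipC. Qed.
Lemma ipZr a x z : ip z (a *: x) = conjc a * ip z x.
Proof. by rewrite ipC ipZl rmorphM /= -!ipC. Qed.
Lemma ip0r z : ip z 0 = 0.
Proof. by rewrite ipC ip0l conjc0. Qed.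
Lemma ipNr x z : ip z (- x) = - ip z x.
Proof. by rewrite -scaleN1r ipZr rmorphN1 mulN1r. Qed.
Lemma ipBr x y z : ip z (x - y) = ip z x - ip z y.
Proof. by rewrite ipDr ipNr. Qed.
Lemma Re_ipC x y : cRe (ip y x) = cRe (ip x y).
Proof. by rewrite ipC ReJ. Qed.
Lemma Im_ipC x y : cIm (ip y x) = - cIm (ip x y).
Proof. by rewrite ipC ImJ. Qed.

Definition nsq x := cRe (ip x x).
Lemma nsq_ge0 x : 0 <= nsq x.
Proof. by have := hinner_ge0 x; rewrite lecE => /andP[]. Qed.
Lemma Im_ipxx x : cIm (ip x x) = 0.
Proof. by have := hinner_ge0 x; rewrite lecE => /andP[/eqP ->]. Qed.
Lemma ip_self x : ip x x = (nsq x)%:C.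
Proof. by apply: complex_ext; rewrite ?ReC ?ImC // Im_ipxx. Qed.
Lemma nsq_eq0 x : nsq x = 0 -> x = 0.
Proof. by move=> e; apply: hinner_eq0; rewrite ip_self e. Qed.
Lemma nsq0 : nsq 0 = 0.
Proof. by rewrite /nsq ip0l. Qed.
Lemma nsqD x y : nsq (x + y) = nsq x + nsq y + 2 * cRe (ip x y).
Proof. rewrite /nsq !ipDl !ipDr !ReD Re_ipC. ring. Qed.
Lemma nsqN x : nsq (- x) = nsq x.
Proof. by rewrite /nsq ipNl ipNr opprK. Qed.
Lemma nsqB x y : nsq (x - y) = nsq x + nsq y - 2 * cRe (ip x y).
Proof. rewrite nsqD nsqN ipNr ReN. ring. Qed.
Lemma nsqZ a x : nsq (a *: x) = (cRe a ^+ 2 + cIm a ^+ 2) * nsq x.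
Proof.
rewrite /nsq ipZl ipZr ip_self !(ReM, ImM) ReJ ImJ ReC ImC. ring.
Qed.
Lemma nsqZr (r : R) x : nsq (r%:C *: x) = r ^+ 2 * nsq x.
Proof. by rewrite nsqZ ReC ImC expr0n /= addr0. Qed.
Lemma Re_ipZr (r : R) x y : cRe (ip x (r%:C *: y)) = r * cRe (ip x y).
Proof. by rewrite ipZr ReM ReJ ImJ ReC ImC oppr0 mul0r subr0. Qed.
Lemma Re_ipZl (r : R) x y : cRe (ip (r%:C *: x) y) = r * cRe (ip x y).
Proof. by rewrite ipZl ReM ReC ImC mul0r subr0. Qed.

Lemma CS x y : cRe (ip x y) ^+ 2 <= nsq x * nsq y.
Proof.
apply: quad_disc; last exact: nsq_ge0.
move=> t; have := nsq_ge0 (x + t%:C *: y).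
rewrite nsqD nsqZr Re_ipZr. lra.
Qed.

Lemma hnormE x : hnorm x = Num.sqrt (nsq x). Proof. by []. Qed.
Lemma hnorm_ge0 x : 0 <= hnorm x. Proof. exact: sqrtr_ge0. Qed.
Lemma sqr_hnorm x : hnorm x ^+ 2 = nsq x.
Proof. by rewrite hnormE sqr_sqrtr // nsq_ge0. Qed.

Lemma sqr_le_ge0 (b c : R) : b ^+ 2 <= c ^+ 2 -> 0 <= c -> b <= c.
Proof. move=> h c0; nra. Qed.

Lemma Re_ip_le x y : cRe (ip x y) <= hnorm x * hnorm y.
Proof.
apply: sqr_le_ge0; last by rewrite mulr_ge0 ?hnorm_ge0.
by rewrite exprMn !sqr_hnorm CS.
Qed.

Lemma hnorm_le_sqr (u v : R) : 0 <= v -> u <= v ^+ 2 -> Num.sqrt u <= v.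
Proof.
move=> v0 h; case: (lerP 0 u) => u0.
  by rewrite -(ger0_norm v0) -(sqrtr_sqr v) ler_sqrt // ?sqr_ge0.
by rewrite ltr0_sqrtr.
Qed.

Lemma hnormD x y : hnorm (x + y) <= hnorm x + hnorm y.
Proof.
apply: hnorm_le_sqr; first by rewrite addr_ge0 ?hnorm_ge0.
change (nsq (x + y) <= (hnorm x + hnorm y) ^+ 2).
rewrite nsqD -!sqr_hnorm; have := Re_ip_le x y. nra.
Qed.

Lemma hnormN x : hnorm (- x) = hnorm x.
Proof. by rewrite !hnormE nsqN. Qed.

Lemma hnormZr (r : R) x : hnorm (r%:C *: x) = `|r| * hnorm x.
Proof. by rewrite !hnormE nsqZr sqrtrM ?sqr_ge0 // sqrtr_sqr. Qed.

Lemma hnorm_eq0 x : hnorm x = 0 -> x = 0.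
Proof. by move=> e; apply: nsq_eq0; rewrite -sqr_hnorm e expr0n. Qed.

Lemma hnorm0 : hnorm (0 : H) = 0.
Proof. by rewrite hnormE nsq0 sqrtr0. Qed.

Lemma ip_ext x y : (forall z, ip z x = ip z y) -> x = y.
Proof.
move=> h; apply/eqP; rewrite -subr_eq0; apply/eqP/hinner_eq0.
by rewrite ipBr h subrr.
Qed.
Lemma ip_extl x y : (forall z, ip x z = ip y z) -> x = y.
Proof. move=> h; apply: ip_ext => z; by rewrite ipC h -ipC. Qed.

End Hilb.

Section Lin.
Variable R : realType.
Variables H1 H2 : hilbert R.
Variable f : H1 -> H2.
Hypothesis fl : is_linear f.
Lemma lin0 : f 0 = 0.
Proof. apply: eq_self_add; have := fl 1 0 0; by rewrite scale1r addr0 scale1r. Qed.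
Lemma linD x y : f (x + y) = f x + f y.
Proof. by have := fl 1 x y; rewrite !scale1r. Qed.
Lemma linZ a x : f (a *: x) = a *: f x.
Proof. by have := fl a x 0; rewrite !addr0 lin0 addr0. Qed.
Lemma linN x : f (- x) = - f x.
Proof. by rewrite -scaleN1r linZ scaleN1r. Qed.
Lemma linB x y : f (x - y) = f x - f y.
Proof. by rewrite linD linN. Qed.
End Lin.

End MT2.
Import MT2.

Module MT3.
Set Implicit Arguments. Unset Strict Implicit. Unset Printing Implicit Defensive.
Local Open Scope ring_scope.
Local Open Scope complex_scope.

Section RealUtil.
Variable R : realType.
Lemma small_le0 (a K : R) : 0 <= K ->
  (forall e, 0 < e -> e <= 1 -> a <= K * e) -> a <= 0.
Proof.
move=> K0 h; case: (lerP a 0) => // a0.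
have d0 : 0 < a + 2 * K + 1 by lra.
have := h (a / (a + 2 * K + 1)) (divr_gt0 a0 d0).
rewrite ler_pdivrMr // mul1r => /(_ ltac:(lra)).
rewrite mulrA ler_pdivlMr //; nra.
Qed.

Lemma inv_nat_le (k m : nat) : (k <= m)%N -> m.+1%:R^-1 <= k.+1%:R^-1 :> R.
Proof.
move=> km; rewrite lef_pV2 ?posrE ?ltr0Sn // ler_nat; by [].
Qed.

Lemma inv_nat_gt0 (k : nat) : 0 < k.+1%:R^-1 :> R.
Proof. by rewrite invr_gt0 ltr0Sn. Qed.

Lemma sqrt_le_1add (t : R) : 0 <= t -> Num.sqrt t <= 1 + t.
Proof. move=> t0; apply: hnorm_le_sqr; nra. Qed.
End RealUtil.

Section Riesz.
Variable R : realType.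
Variable H : hilbert R.
Local Notation ip := (hinner H).


Lemma complete_nsq (u : nat -> H) :
  (forall e, 0 < e -> exists N, forall m n, (N <= m)%N -> (N <= n)%N -> nsq (u m - u n) < e) ->
  exists l, forall e, 0 < e -> exists N, forall n, (N <= n)%N -> nsq (u n - l) < e.
Proof.
move=> hc.
have hc' : forall e : R, 0 < e -> exists N, forall m n, (N <= m)%N -> (N <= n)%N ->
    Num.sqrt (complex.Re (hinner H (u m - u n) (u m - u n))) < e.
  move=> e e0; have [N hN] := hc (e ^+ 2) (exprn_gt0 _ e0).
  exists N => m n hm hn; have := hN m n hm hn.
  rewrite -/(hnorm _) -sqr_hnorm => h.
  by rewrite -(ltr_pXn2r (n:=2)) // ?nnegrE ?hnorm_ge0 ?ltW.
have [l hl] := hcomplete hc'.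
exists l => e e0; have [N hN] := hl (Num.sqrt e) ltac:(by rewrite sqrtr_gt0).
exists N => n /hN; rewrite -/(hnorm _) => h.
by rewrite -sqr_hnorm -(sqr_sqrtr (ltW e0)) ltr_pXn2r // ?nnegrE ?hnorm_ge0 ?sqrtr_ge0.
Qed.

Lemma nsq_le2 (x y : H) : nsq (x + y) <= 2 * nsq x + 2 * nsq y.
Proof. have := nsqD x y; have := nsqB x y; have := nsq_ge0 (x - y). lra. Qed.

Lemma nsqBC (x y : H) : nsq (x - y) = nsq (y - x).
Proof. by rewrite -nsqN opprB. Qed.

Lemma CSc (x y : H) : cRe (ip x y) ^+ 2 + cIm (ip x y) ^+ 2 <= nsq x * nsq y.
Proof.
set w := ip x y.
have e : cRe (ip x (w *: y)) = cRe w ^+ 2 + cIm w ^+ 2.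
  by rewrite ipZr -/w ReM ReJ ImJ; ring.
have := CS x (w *: y); rewrite e nsqZ.
set s := cRe w ^+ 2 + cIm w ^+ 2 => h.
have s0 : 0 <= s by rewrite /s addr_ge0 ?sqr_ge0.
case: (eqVneq s 0) => [->|sn]; first by rewrite mulr_ge0 ?nsq_ge0.
have sp : 0 < s by rewrite lt_def sn s0.
rewrite -(ler_pM2r sp); move: h; rewrite expr2; nra.
Qed.

Lemma Re_orth (z x : H) : (forall t : R, nsq z <= nsq (z + t%:C *: x)) -> cRe (ip z x) = 0.
Proof.
move=> h; have : cRe (ip z x) ^+ 2 <= 0 * nsq x.
  apply: quad_disc; last exact: nsq_ge0.
  move=> t; have := h t; rewrite nsqD nsqZr Re_ipZr; lra.
rewrite mul0r => h2; have := sqr_ge0 (cRe (ip z x)); nra.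
Qed.

Lemma riesz (f : H -> R[i]) (fl : forall a x y, f (a *: x + y) = a * f x + f y)
  (C : R) (fb : forall x, cRe (f x) ^+ 2 + cIm (f x) ^+ 2 <= C * nsq x) :
  exists y, forall x, f x = ip x y.
Proof.
have f0 : f 0 = 0 by apply: eq_self_add; have := fl 1 0 0; rewrite scale1r addr0 mul1r.
have fZ a x : f (a *: x) = a * f x by have := fl a x 0; rewrite addr0 f0 addr0.
have fD x y : f (x + y) = f x + f y by have := fl 1 x y; rewrite scale1r mul1r.
have fB x y : f (x - y) = f x - f y by rewrite fD -scaleN1r fZ mulN1r.
case: (pselect (exists x0, f x0 != 0)) => [[x0 fx0]|nf]; last first.
  exists 0 => x; rewrite ip0r; case: (eqVneq (f x) 0) => // h; exfalso; apply: nf; by exists x.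
pose z0 := (f x0)^-1 *: x0.
have fz0 : f z0 = 1 by rewrite fZ mulVf.
pose E : set R := [set r | exists x, f x = 1 /\ r = nsq x]%classic.
have hlb : has_lbound E by exists 0 => r [x [_ ->]]; exact: nsq_ge0.
have hne : (E !=set0)%classic by exists (nsq z0); exists z0.
have hinf : has_inf E by split.
set d := inf E.
have dle x : f x = 1 -> d <= nsq x by move=> fx; apply: ge_inf => //; exists x.
have d0 : 0 <= d by apply: lb_le_inf => // r [x [_ ->]]; exact: nsq_ge0.
have hmin k : exists x, f x = 1 /\ nsq x < d + k.+1%:R^-1.
  have [r [x [fx ->]] hr] := inf_adherent (inv_nat_gt0 R k) hinf.
  by exists x.
have [xs hxs] := choice hmin.
have hcau m n : nsq (xs m - xs n) <= 2 * m.+1%:R^-1 + 2 * n.+1%:R^-1.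
  have [fm nm] := hxs m; have [fn nn] := hxs n.
  have hh : f ((2^-1)%:C *: (xs m + xs n)) = 1.
    rewrite fZ fD fm fn -(rmorph1 (real_complex R)) -rmorphD -rmorphM /=.
    by rewrite mulVf // pnatr_eq0.
  have := dle _ hh; rewrite nsqZr.
  have := nsqD (xs m) (xs n); have := nsqB (xs m) (xs n).
  have := nsq_ge0 (xs m + xs n).
  move=> h1 h2 h3 h4.
  have : 4 * d <= nsq (xs m + xs n).
    apply: (le_trans (y := 4 * ((2^-1)^+2 * nsq (xs m + xs n)))).
      by rewrite ler_pM2l.
    rewrite mulrA; have -> : 4 * (2^-1 : R)^+2 = 1 by field.
    by rewrite mul1r.
  set a := m.+1%:R^-1 in nm *; set b := n.+1%:R^-1 in nn *; lra.
have [z hz] : exists z, forall e, 0 < e -> exists N, forall n, (N <= n)%N -> nsq (xs n - z) < e.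
  apply: complete_nsq => e e0.
  have [k hk] := ltr_add_invr (ltac:(lra) : 0 < e / 4).
  exists k => m n km kn; apply: (le_lt_trans (hcau m n)).
  have := inv_nat_le R km; have := inv_nat_le R kn; move: hk.
  set a := (m.+1%:R^-1 : R); set b := (n.+1%:R^-1 : R); set c := (k.+1%:R^-1 : R); lra.
have fz : f z = 1.
  set w := f z - 1.
  have hw : forall e, 0 < e -> e <= 1 -> cRe w ^+ 2 + cIm w ^+ 2 <= `|C| * e.
    move=> e e0 _; have [N hN] := hz e e0; have := hN N (leqnn _).
    have := fb (z - xs N); rewrite fB (proj1 (hxs N)) -/w nsqBC => h1 h2.
    apply: (le_trans h1); apply: (le_trans (y := `|C| * nsq (xs N - z))).
      by rewrite (nsqBC z); apply: ler_wpM2r; [exact: nsq_ge0 | exact: ler_norm].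
    by rewrite nsqBC; apply: ler_wpM2l; [exact: normr_ge0 | exact: ltW h2].
  have := small_le0 (normr_ge0 C) hw => h.
  have h1 : cRe w = 0 by have := sqr_ge0 (cRe w); have := sqr_ge0 (cIm w); nra.
  have h2 : cIm w = 0 by have := sqr_ge0 (cRe w); have := sqr_ge0 (cIm w); nra.
  have : w = 0 by apply: complex_ext; rewrite ?h1 ?h2.
  by move/eqP; rewrite subr_eq0 => /eqP.
have zmin : forall x, f x = 1 -> nsq z <= nsq x.
  move=> x fx; apply: (le_trans _ (dle x fx)).
  rewrite -subr_le0; apply: (@small_le0 _ _ (2 * d + 6)); first lra.
  move=> e e0 e1.
  have [N hN] := hz (e ^+ 2) (exprn_gt0 _ e0).
  have [k hk] := ltr_add_invr (ltac:(lra) : 0 < e).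
  set n := maxn N k.
  have [fn nn] := hxs n.
  have hb : nsq (xs n - z) < e ^+ 2 by apply: hN; rewrite leq_maxl.
  have hk' : n.+1%:R^-1 <= k.+1%:R^-1 :> R by apply: inv_nat_le; rewrite leq_maxr.
  have hnb : hnorm (z - xs n) <= e.
    rewrite hnormE nsqBC; apply: hnorm_le_sqr; lra.
  have hnx : hnorm (xs n) <= 1 + nsq (xs n) by apply: sqrt_le_1add; exact: nsq_ge0.
  have ez : z = xs n + (z - xs n) by rewrite addrC subrK.
  have e2 : e ^+ 2 <= e by rewrite expr2; nra.
  have a1 : n.+1%:R^-1 <= 1 :> R by rewrite invf_le1 ?ler1n ?ltr0Sn.
  move: hk' hk nn a1; set a := (n.+1%:R^-1 : R); set c := (k.+1%:R^-1 : R) => hk' hk nn a1.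
  have nx1 : nsq (xs n) <= d + 1 by lra.
  have r1 : cRe (ip (xs n) (z - xs n)) <= (2 + d) * e.
    apply: (le_trans (Re_ip_le _ _)).
    apply: (le_trans (y := (1 + nsq (xs n)) * hnorm (z - xs n))).
      by apply: ler_wpM2r; [exact: hnorm_ge0 | exact: hnx].
    apply: (le_trans (y := (1 + nsq (xs n)) * e)).
      by apply: ler_wpM2l; [have := nsq_ge0 (xs n); lra | exact: hnb].
    by apply: ler_wpM2r; [lra | lra].
  rewrite {1}ez nsqD (nsqBC z); lra.
have orth : forall x, f x = 0 -> ip x z = 0.
  move=> x fx.
  have h1 : forall x, f x = 0 -> cRe (ip z x) = 0.
    move=> y fy; apply: Re_orth => t; apply: zmin.
    by rewrite fD fZ fy mulr0 addr0.
  have a1 := h1 x fx.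
  have a2 := h1 ('i *: x) ltac:(by rewrite fZ fx mulr0).
  rewrite ipZr ReM ReJ ImJ Rei Imi mul0r sub0r mulN1r opprK in a2.
  by rewrite ipC; apply: complex_ext; rewrite ?ReJ ?ImJ ?a1 ?a2 ?oppr0.
have nz : nsq z != 0.
  apply/eqP => /nsq_eq0 e; move: fz; rewrite e f0 => /eqP; rewrite eq_sym oner_eq0.
  by [].
exists ((nsq z)^-1%:C *: z) => x.
have hv : f (x - f x *: z) = 0 by rewrite fB fZ fz mulr1 subrr.
have := orth _ hv; rewrite ipBl ipZl ip_self => /eqP; rewrite subr_eq0 => /eqP hxz.
rewrite ipZr hxz.
rewrite conjC_real.
by rewrite mulrCA -rmorphM /= mulVf // mulr1.
Qed.
End Riesz.

End MT3.
Import MT3.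

Module MT4.
Set Implicit Arguments. Unset Strict Implicit. Unset Printing Implicit Defensive.
Local Open Scope ring_scope.
Local Open Scope complex_scope.

Section Adj.
Variable R : realType.
Variables H1 H2 : hilbert R.

Lemma bounded_nsq (A : H1 -> H2) : is_bounded A ->
  exists C, 0 <= C /\ forall x, nsq (A x) <= C * nsq x.
Proof.
move=> [M hM]; exists (M ^+ 2); split; first exact: sqr_ge0.
move=> x; rewrite -!sqr_hnorm -exprMn; have := hM x; have := hnorm_ge0 (A x).
move=> h0 h1; rewrite !expr2; nra.
Qed.

Lemma nsq_bounded (A : H1 -> H2) C : (forall x, nsq (A x) <= C * nsq x) -> is_bounded A.
Proof.
move=> h; exists (Num.sqrt (`|C|)) => x.
rewrite !hnormE -sqrtrM ?normr_ge0 // ler_sqrt; last first.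
  by rewrite mulr_ge0 ?normr_ge0 ?nsq_ge0.
by apply: (le_trans (h x)); apply: ler_wpM2r; [exact: nsq_ge0|exact: ler_norm].
Qed.

Lemma adjoint_exists (A : H1 -> H2) : is_linear A -> is_bounded A ->
  exists S, is_adjoint A S.
Proof.
move=> Al Ab; have [C [C0 hC]] := bounded_nsq Ab.
have h : forall y, exists y', forall x, hinner H2 (A x) y = hinner H1 x y'.
  move=> y; apply: (@riesz _ _ (fun x => hinner H2 (A x) y) _ (C * nsq y)).
    by move=> a x z; rewrite Al ipDl ipZl.
  move=> x; apply: (le_trans (CSc _ _)).
  rewrite mulrAC; apply: ler_wpM2r; [exact: nsq_ge0|exact: hC].
have [S hS] := choice h; by exists S.
Qed.

Lemma adjointP (A : H1 -> H2) : is_linear A -> is_bounded A -> is_adjoint A (adjoint A).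
Proof.
move=> Al Ab; rewrite /adjoint; case: pselect => [e|ne].
  exact: (projT2 (cid e)).
by exfalso; apply: ne; exact: adjoint_exists.
Qed.

Lemma opnorm_has_sup (A : H1 -> H2) : is_bounded A ->
  has_sup [set hnorm (A x) | x in [set x : H1 | hnorm x <= 1]]%classic.
Proof.
move=> [M hM]; split.
  exists (hnorm (A 0)); exists 0 => //; rewrite /= hnorm0 ler01 //.
exists `|M| => y [x /= hx <-].
apply: (le_trans (hM x)); apply: (le_trans (y := `|M| * hnorm x)).
  by apply: ler_wpM2r; [exact: hnorm_ge0|exact: ler_norm].
by rewrite -[X in _ <= X]mulr1; apply: ler_wpM2l; [exact: normr_ge0|].
Qed.

Lemma opnorm_ge0 (A : H1 -> H2) : is_bounded A -> 0 <= opnorm A.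
Proof.
move=> Ab; apply: (le_trans (hnorm_ge0 (A 0))).
by apply: (sup_upper_bound (opnorm_has_sup Ab)); exists 0 => //=; rewrite hnorm0 ler01.
Qed.

Lemma opnorm_ub (A : H1 -> H2) : is_linear A -> is_bounded A ->
  forall x, hnorm (A x) <= opnorm A * hnorm x.
Proof.
move=> Al Ab x; case: (eqVneq (hnorm x) 0) => [/hnorm_eq0 ->|nx].
  by rewrite (lin0 Al) !hnorm0 mulr0.
have xp : 0 < hnorm x by rewrite lt_def nx hnorm_ge0.
set r := hnorm x.
have hy : hnorm (r^-1%:C *: x) = 1 by rewrite hnormZr ger0_norm ?invr_ge0 ?ltW // mulVf.
have mem : [set hnorm (A x) | x in [set x : H1 | hnorm x <= 1]]%classic (hnorm (A (r^-1%:C *: x))).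
  by exists (r^-1%:C *: x) => //=; rewrite hy.
have := sup_upper_bound (opnorm_has_sup Ab) mem.
rewrite (linZ Al) hnormZr ger0_norm; last by rewrite invr_ge0 hnorm_ge0.
move=> h; have := ler_wpM2r (ltW xp) h; by rewrite mulrAC mulVf // mul1r.
Qed.

Lemma opnorm_le (A : H1 -> H2) c : 0 <= c -> (forall x, hnorm (A x) <= c * hnorm x) ->
  opnorm A <= c.
Proof.
move=> c0 h; apply: ge_sup.
  exists (hnorm (A 0)); exists 0 => //; rewrite /= hnorm0 ler01 //.
move=> y [x /= hx <-]; apply: (le_trans (h x)).
by rewrite -[X in _ <= X]mulr1; apply: ler_wpM2l.
Qed.
End Adj.

Section Iter.
Variable R : realType.
Variable H : hilbert R.
Lemma iter_linear (T : H -> H) n : is_linear T -> is_linear (iter n T).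
Proof.
move=> Tl; elim: n => [|n IH] a x y //=; by rewrite IH Tl.
Qed.
Lemma iter_nsq (T : H -> H) n : is_bounded T -> exists C, 0 <= C /\ forall x, nsq (iter n T x) <= C * nsq x.
Proof.
move=> Tb; have [C [C0 hC]] := bounded_nsq Tb.
elim: n => [|n [D [D0 hD]]]; first by exists 1; split => // x; rewrite mul1r.
exists (C * D); split; first exact: mulr_ge0.
move=> x /=; apply: (le_trans (hC _)); rewrite -mulrA; exact: ler_wpM2l.
Qed.
Lemma iter_bounded (T : H -> H) n : is_bounded T -> is_bounded (iter n T).
Proof. move=> Tb; have [C [_ hC]] := iter_nsq n Tb; exact: nsq_bounded hC. Qed.
End Iter.

End MT4.
Import MT4.

Module MT5.
Set Implicit Arguments. Unset Strict Implicit. Unset Printing Implicit Defensive.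
Local Open Scope ring_scope.
Local Open Scope complex_scope.

Section Conv.
Variable R : realType.
Implicit Types (u v : nat -> R) (a b l : R).

Definition conv u l := forall e, 0 < e -> exists N, forall n, (N <= n)%N -> `|u n - l| < e.


Lemma le0_small (a : R) : (forall e, 0 < e -> a < e) -> a <= 0.
Proof.
move=> h; case: (lerP a 0) => // a0; have := h (a / 2) ltac:(lra). lra.
Qed.

Lemma conv_uniq u a b : conv u a -> conv u b -> a = b.
Proof.
move=> ha hb; apply/eqP; rewrite -subr_eq0 -normr_le0; apply: le0_small => e e0.
have [N1 h1] := ha (e / 2) ltac:(lra); have [N2 h2] := hb (e / 2) ltac:(lra).
have := h1 (maxn N1 N2) (leq_maxl _ _); have := h2 (maxn N1 N2) (leq_maxr _ _).
have := ler_normB (u (maxn N1 N2) - b) (u (maxn N1 N2) - a).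
have -> : u (maxn N1 N2) - b - (u (maxn N1 N2) - a) = a - b by ring.
by rewrite distrC; lra.
Qed.

Lemma conv_ext u v l : (forall n, u n = v n) -> conv u l -> conv v l.
Proof. by move=> e h; have -> : v = u by apply: funext => n; rewrite e. Qed.

Lemma conv_cst a : conv (fun _ => a) a.
Proof. by move=> e e0; exists 0%N => n _; rewrite subrr normr0. Qed.

Lemma convD u v a b : conv u a -> conv v b -> conv (fun n => u n + v n) (a + b).
Proof.
move=> ha hb e e0.
have [N1 h1] := ha (e / 2) ltac:(lra); have [N2 h2] := hb (e / 2) ltac:(lra).
exists (maxn N1 N2) => n hn.
have := h1 n (leq_trans (leq_maxl _ _) hn); have := h2 n (leq_trans (leq_maxr _ _) hn).
have := ler_normD (u n - a) (v n - b).
have -> : u n - a + (v n - b) = u n + v n - (a + b) by ring.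
lra.
Qed.

Lemma convZ c u a : conv u a -> conv (fun n => c * u n) (c * a).
Proof.
move=> ha e e0.
have c1 : 0 < `|c| + 1 by have := normr_ge0 c; lra.
have [N h] := ha (e / (`|c| + 1)) (divr_gt0 e0 c1).
exists N => n /h; rewrite -mulrBr normrM => hn.
apply: (le_lt_trans (y := `|c| * (e / (`|c| + 1)))).
  by apply: ler_wpM2l; [exact: normr_ge0 | exact: ltW].
rewrite mulrA ltr_pdivrMr // mulrDr mulr1 mulrC ltrDl; exact: e0.
Qed.

Lemma convN u a : conv u a -> conv (fun n => - u n) (- a).
Proof.
move=> h; apply: (conv_ext (u := fun n => (-1) * u n)); first by move=> n; rewrite mulN1r.
by rewrite -[- a]mulN1r; exact: convZ.
Qed.

Lemma convB u v a b : conv u a -> conv v b -> conv (fun n => u n - v n) (a - b).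
Proof. by move=> ha hb; apply: convD => //; exact: convN. Qed.

Lemma conv_le u v a b : (forall n, u n <= v n) -> conv u a -> conv v b -> a <= b.
Proof.
move=> h ha hb; rewrite -subr_le0; apply: le0_small => e e0.
have [N1 h1] := ha (e / 2) ltac:(lra); have [N2 h2] := hb (e / 2) ltac:(lra).
have := h1 (maxn N1 N2) (leq_maxl _ _); have := h2 (maxn N1 N2) (leq_maxr _ _).
have := h (maxn N1 N2).
move: (u _) (v _) => x y hxy.
rewrite !ltr_norml; lra.
Qed.

Lemma conv_ub u a c : (forall n, u n <= c) -> conv u a -> a <= c.
Proof. by move=> h ha; apply: (conv_le h ha); exact: conv_cst. Qed.

Lemma conv_lb u a c : (forall n, c <= u n) -> conv u a -> c <= a.
Proof. by move=> h ha; apply: (conv_le h _ ha); exact: conv_cst. Qed.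

Lemma mono_le u : (forall n, u n <= u n.+1) -> forall m n, (m <= n)%N -> u m <= u n.
Proof.
move=> h m n /subnK <-; elim: (n - m)%N => [|k IH]; first by rewrite add0n.
by apply: (le_trans IH); rewrite addSn; exact: h.
Qed.

Lemma mono_conv u C : (forall n, u n <= u n.+1) -> (forall n, u n <= C) ->
  conv u (sup (range u)).
Proof.
move=> hm hb.
have hs : has_sup (range u).
  by split; [exists (u 0%N); exists 0%N | exists C => _ [n _ <-]].
move=> e e0; have [_ [N _ <-] hN] := sup_adherent e0 hs.
exists N => n hn; rewrite ler0_norm; last first.
  by rewrite subr_le0; apply: sup_upper_bound => //; exists n.
have := mono_le hm hn; lra.
Qed.

Lemma mono_conv_ex u C : (forall n, u n <= u n.+1) -> (forall n, u n <= C) ->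
  exists l, conv u l.
Proof. by move=> hm hb; exists (sup (range u)); exact: mono_conv hb. Qed.

Definition limr u : R :=
  match pselect (exists l, conv u l) with
  | left e => projT1 (cid e)
  | right _ => 0
  end.

Lemma limrP u : (exists l, conv u l) -> conv u (limr u).
Proof.
move=> ex; rewrite /limr; case: pselect => [e|ne]; last by [].
exact: (projT2 (cid e)).
Qed.

Lemma limrE u l : conv u l -> limr u = l.
Proof. move=> h; apply: (conv_uniq (limrP _) h); by exists l. Qed.

Lemma mono_limr_ub u C : (forall n, u n <= u n.+1) -> (forall n, u n <= C) ->
  forall n, u n <= limr u.
Proof.
move=> hm hb n; rewrite (limrE (mono_conv hm hb)).
apply: sup_upper_bound; last by exists n.
by split; [exists (u 0%N); exists 0%N | exists C => _ [k _ <-]].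
Qed.
End Conv.

End MT5.
Import MT5.

Module MT6.
Set Implicit Arguments. Unset Strict Implicit. Unset Printing Implicit Defensive.
Local Open Scope ring_scope.
Local Open Scope complex_scope.

Section L2.
Variable R : realType.
Variable E : hilbert R.

Definition ps (x : nat -> E) (N : nat) : R := \sum_(k < N) nsq (x k).
Definition sqsum (x : nat -> E) := exists C, forall N, ps x N <= C.

Record l2 := L2 { l2f :> nat -> E; l2P : sqsum l2f }.

Lemma l2_ext (x y : l2) : (forall k, x k = y k) -> x = y.
Proof.
case: x => f fP; case: y => g gP /= h.
have e : f = g by apply: funext.
subst g; by rewrite (Prop_irrelevance fP gP).
Qed.

HB.instance Definition _ := gen_eqMixin l2.
HB.instance Definition _ := gen_choiceMixin l2.

Lemma ps_ge0 x N : 0 <= ps x N.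
Proof. by apply: sumr_ge0 => k _; exact: nsq_ge0. Qed.
Lemma psS x N : ps x N.+1 = ps x N + nsq (x N).
Proof. by rewrite /ps big_ord_recr. Qed.
Lemma ps_mono x N : ps x N <= ps x N.+1.
Proof. by rewrite psS lerDl nsq_ge0. Qed.
Lemma ps_add x y N : ps (fun k => x k + y k) N <= 2 * ps x N + 2 * ps y N.
Proof.
rewrite /ps !mulr_sumr -big_split /=; apply: ler_sum => k _; exact: nsq_le2.
Qed.
Lemma ps_opp x N : ps (fun k => - x k) N = ps x N.
Proof. by apply: eq_bigr => k _; rewrite nsqN. Qed.
Lemma ps_scale a x N : ps (fun k => a *: x k) N = (cRe a ^+ 2 + cIm a ^+ 2) * ps x N.
Proof. by rewrite /ps mulr_sumr; apply: eq_bigr => k _; rewrite nsqZ. Qed.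

Lemma sqsum_add (x y : l2) : sqsum (fun k => x k + y k).
Proof.
case: (l2P x) => Cx hx; case: (l2P y) => Cy hy.
exists (2 * Cx + 2 * Cy) => N; apply: (le_trans (ps_add _ _ N)).
have := hx N; have := hy N; lra.
Qed.
Lemma sqsum_opp (x : l2) : sqsum (fun k => - x k).
Proof. case: (l2P x) => C hC; exists C => N; by rewrite ps_opp. Qed.
Lemma sqsum_zero : sqsum (fun _ => (0 : E)).
Proof. exists 0 => N; rewrite /ps big1 // => k _; exact: nsq0. Qed.
Lemma sqsum_scale a (x : l2) : sqsum (fun k => a *: x k).
Proof.
case: (l2P x) => C hC; exists ((cRe a ^+ 2 + cIm a ^+ 2) * C) => N.
rewrite ps_scale; apply: ler_wpM2l; [by rewrite addr_ge0 ?sqr_ge0 | exact: hC].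
Qed.

Definition l2add x y := L2 (sqsum_add x y).
Definition l2opp x := L2 (sqsum_opp x).
Definition l2zero := L2 sqsum_zero.
Definition l2scale a x := L2 (sqsum_scale a x).

Lemma l2addA : associative l2add.
Proof. by move=> x y z; apply: l2_ext => k /=; rewrite addrA. Qed.
Lemma l2addC : commutative l2add.
Proof. by move=> x y; apply: l2_ext => k /=; rewrite addrC. Qed.
Lemma l2add0 : left_id l2zero l2add.
Proof. by move=> x; apply: l2_ext => k /=; rewrite add0r. Qed.
Lemma l2addN : left_inverse l2zero l2opp l2add.
Proof. by move=> x; apply: l2_ext => k /=; rewrite addNr. Qed.

HB.instance Definition _ := GRing.isZmodule.Build l2 l2addA l2addC l2add0 l2addN.

Lemma l2scaleA a b x : l2scale a (l2scale b x) = l2scale (a * b) x.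
Proof. by apply: l2_ext => k /=; rewrite scalerA. Qed.
Lemma l2scale1 : left_id 1 l2scale.
Proof. by move=> x; apply: l2_ext => k /=; rewrite scale1r. Qed.
Lemma l2scaleDr : right_distributive l2scale +%R.
Proof. by move=> a x y; apply: l2_ext => k /=; rewrite scalerDr. Qed.
Lemma l2scaleDl x : {morph l2scale^~ x : a b / a + b}.
Proof. by move=> a b; apply: l2_ext => k /=; rewrite scalerDl. Qed.

HB.instance Definition _ := GRing.Zmodule_isLmodule.Build R[i] l2 l2scaleA l2scale1 l2scaleDr l2scaleDl.

Lemma l2fD (x y : l2) k : (x + y) k = x k + y k. Proof. by []. Qed.
Lemma l2fN (x : l2) k : (- x) k = - x k. Proof. by []. Qed.
Lemma l2fB (x y : l2) k : (x - y) k = x k - y k. Proof. by []. Qed.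
Lemma l2fZ a (x : l2) k : (a *: x) k = a *: x k. Proof. by []. Qed.
Lemma l2f0 k : (0 : l2) k = 0. Proof. by []. Qed.

Local Notation ip := (hinner E).
Definition rps (x y : l2) N := \sum_(k < N) cRe (ip (x k) (y k)).
Definition ips (x y : l2) N := \sum_(k < N) cIm (ip (x k) (y k)).

Lemma Re_ip_pol (a b : E) : cRe (ip a b) = (nsq (a + b) - nsq (a - b)) / 4.
Proof. rewrite nsqD nsqB; lra. Qed.
Lemma Im_ip_Re (a b : E) : cIm (ip a b) = cRe (ip a ('i *: b)).
Proof. by rewrite ipZr ReM ReJ ImJ Rei Imi mul0r sub0r mulN1r opprK. Qed.

Lemma ps_conv (x : l2) : exists l, conv (ps x) l.
Proof. case: (l2P x) => C hC; exact: (mono_conv_ex (@ps_mono x) hC). Qed.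

Lemma rps_conv x y : exists l, conv (rps x y) l.
Proof.
have [l1 h1] := ps_conv (x + y); have [l2 h2] := ps_conv (x - y).
exists ((l1 - l2) / 4); rewrite mulrC.
apply: (conv_ext (u := fun N => 4^-1 * (ps (x + y) N - ps (x - y) N))).
  move=> N; rewrite /rps /ps -sumrB mulr_sumr; apply: eq_bigr => k _.
  by rewrite Re_ip_pol mulrC.
by apply: convZ; apply: convB.
Qed.

Lemma ips_rps x y N : ips x y N = rps x ('i *: y) N.
Proof. by apply: eq_bigr => k _; rewrite Im_ip_Re. Qed.

Lemma ips_conv x y : exists l, conv (ips x y) l.
Proof.
have [l h] := rps_conv x ('i *: y); exists l.
by apply: (conv_ext (u := rps x ('i *: y))) => // N; rewrite ips_rps.
Qed.

Definition l2ip (x y : l2) : R[i] := (limr (rps x y)) +i* (limr (ips x y)).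

Lemma rps_lin a x y z N : rps (a *: x + y) z N =
  cRe a * rps x z N - cIm a * ips x z N + rps y z N.
Proof.
rewrite /rps /ips !mulr_sumr -sumrB -big_split /=; apply: eq_bigr => k _.
by rewrite /= ipDl ipZl ReD ReM.
Qed.
Lemma ips_lin a x y z N : ips (a *: x + y) z N =
  cRe a * ips x z N + cIm a * rps x z N + ips y z N.
Proof.
rewrite /rps /ips !mulr_sumr -!big_split /=; apply: eq_bigr => k _.
by rewrite /= ipDl ipZl ImD ImM.
Qed.

Lemma l2ip_linl a x y z : l2ip (a *: x + y) z = a * l2ip x z + l2ip y z.
Proof.
have [r1 h1] := rps_conv x z; have [i1 h2] := ips_conv x z.
have [r2 h3] := rps_conv y z.
have [i2 h4] := ips_conv y z.
rewrite /l2ip (limrE h1) (limrE h2) (limrE h3) (limrE h4).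
apply: complex_ext; rewrite ?ReD ?ImD ?ReM ?ImM /=.
  apply: limrE; apply: (conv_ext (u := fun N => cRe a * rps x z N - cIm a * ips x z N + rps y z N)).
    by move=> N; rewrite rps_lin.
  by apply: convD => //; apply: convB; apply: convZ.
apply: limrE; apply: (conv_ext (u := fun N => cRe a * ips x z N + cIm a * rps x z N + ips y z N)).
  by move=> N; rewrite ips_lin.
by apply: convD => //; apply: convD; apply: convZ.
Qed.

Lemma l2ip_conj x y : l2ip y x = conjc (l2ip x y).
Proof.
have [r1 h1] := rps_conv x y; have [i1 h2] := ips_conv x y.
rewrite /l2ip (limrE h1) (limrE h2); apply: complex_ext => /=.
  apply: limrE; apply: (conv_ext (u := rps x y)) => // N.
  by apply: eq_bigr => k _; rewrite Re_ipC.
apply: limrE; apply: (conv_ext (u := fun N => - ips x y N)); last exact: convN.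
by move=> N; rewrite /ips -sumrN; apply: eq_bigr => k _; rewrite Im_ipC opprK.
Qed.

Lemma ips_self x N : ips x x N = 0.
Proof. by rewrite /ips big1 // => k _; rewrite Im_ipxx. Qed.

Lemma l2ip_self_Im x : cIm (l2ip x x) = 0.
Proof. rewrite /l2ip /=; apply: limrE; apply: (conv_ext (u := fun _ => 0)); [by move=> N; rewrite ips_self|exact: conv_cst]. Qed.

Lemma rps_self x N : rps x x N = ps x N.
Proof. by []. Qed.

Lemma l2ip_self_Re x : cRe (l2ip x x) = limr (ps x).
Proof. by []. Qed.

Lemma ps_le_N (x : l2) N : ps x N <= cRe (l2ip x x).
Proof.
rewrite l2ip_self_Re; case: (l2P x) => C hC.
exact: (mono_limr_ub (@ps_mono x) hC).
Qed.

Lemma N_le (x : l2) C : (forall N, ps x N <= C) -> cRe (l2ip x x) <= C.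
Proof.
move=> h; rewrite l2ip_self_Re; have [l hl] := ps_conv x.
by rewrite (limrE hl); apply: conv_ub hl.
Qed.

Lemma l2ip_ge0 x : 0 <= l2ip x x.
Proof.
rewrite lecE l2ip_self_Im eqxx /=.
by apply: (le_trans (ps_ge0 x 0)); exact: ps_le_N.
Qed.

Lemma l2ip_eq0 x : l2ip x x = 0 -> x = 0.
Proof.
move=> e; have e1 : cRe (l2ip x x) = 0 by rewrite e.
apply: l2_ext => k; rewrite l2f0; apply: nsq_eq0.
have := ps_le_N x k.+1; rewrite e1 psS; have := ps_ge0 x k; have := nsq_ge0 (x k).
lra.
Qed.
End L2.

End MT6.
Import MT6.

Module MT6b.
Set Implicit Arguments. Unset Strict Implicit. Unset Printing Implicit Defensive.
Local Open Scope ring_scope.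
Local Open Scope complex_scope.

Section SqrtUtil.
Variable R : realType.
Lemma sqrt_lt (a e : R) : 0 < e -> a < e ^+ 2 -> Num.sqrt a < e.
Proof.
move=> e0 h; rewrite -(ger0_norm (ltW e0)) -sqrtr_sqr ltr_sqrt //.
by rewrite exprn_gt0.
Qed.
Lemma sqrt_lt_inv (a e : R) : 0 < e -> Num.sqrt a < Num.sqrt e -> a < e.
Proof. by move=> e0; rewrite ltr_sqrt. Qed.
End SqrtUtil.

Section L2complete.
Variable R : realType.
Variable E : hilbert R.
Local Notation NN v := (cRe (l2ip v v)).

Lemma l2_complete (u : nat -> l2 E) :
  (forall e, 0 < e -> exists N, forall m n, (N <= m)%N -> (N <= n)%N ->
     Num.sqrt (cRe (l2ip (u m - u n) (u m - u n))) < e) ->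
  exists l, forall e, 0 < e -> exists N, forall n, (N <= n)%N ->
     Num.sqrt (cRe (l2ip (u n - l) (u n - l))) < e.
Proof.
move=> hc.
have hc2 : forall e, 0 < e -> exists N, forall m n, (N <= m)%N -> (N <= n)%N -> NN (u m - u n) < e.
  move=> e e0; have [N hN] := hc (Num.sqrt e) ltac:(by rewrite sqrtr_gt0).
  by exists N => m n hm hn; apply: sqrt_lt_inv => //; apply: hN.
have hco : forall k, exists l, forall e, 0 < e -> exists N, forall n, (N <= n)%N -> nsq (u n k - l) < e.
  move=> k; apply: complete_nsq => e e0; have [N hN] := hc2 e e0.
  exists N => m n hm hn; apply: le_lt_trans (hN m n hm hn).
  apply: (le_trans _ (ps_le_N _ k.+1)); rewrite psS.
  by rewrite lerDr ps_ge0.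
have [lk hlk] := choice hco.
have est : forall e, 0 < e -> exists N, forall n, (N <= n)%N -> forall M,
    ps (fun k => u n k - lk k) M <= e.
  move=> e e0; have [N hN] := hc2 e e0; exists N => n hn M.
  rewrite -subr_le0; apply: (@small_le0 _ _ (3 * M%:R + 2 * e)).
    by rewrite addr_ge0 ?mulr_ge0 ?ler0n // ltW.
  move=> d d0 d1.
  have hNk : forall k, exists Nk, forall m, (Nk <= m)%N -> nsq (u m k - lk k) < d ^+ 2.
    by move=> k; apply: hlk; rewrite exprn_gt0.
  have [Nk hNk'] := choice hNk.
  set m := maxn N (\max_(k < M) Nk k).
  have hm : (N <= m)%N by rewrite leq_maxl.
  have hterm : forall k : 'I_M, nsq (u n k - lk k) <= (1 + 2 * d) * nsq (u n k - u m k) + 3 * d.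
    move=> k.
    have hb : nsq (u m k - lk k) < d ^+ 2.
      apply: hNk'; apply: leq_trans (leq_maxr _ _).
      exact: (@leq_bigmax _ (fun k : 'I_M => Nk k) k).
    have hnb : hnorm (u m k - lk k) <= d by rewrite hnormE; apply: hnorm_le_sqr; lra.
    have hna : hnorm (u n k - u m k) <= 1 + nsq (u n k - u m k).
      by apply: sqrt_le_1add; exact: nsq_ge0.
    have ee : u n k - lk k = (u n k - u m k) + (u m k - lk k) by rewrite addrA subrK.
    rewrite ee nsqD.
    have r1 : cRe (hinner E (u n k - u m k) (u m k - lk k)) <= (1 + nsq (u n k - u m k)) * d.
      apply: (le_trans (Re_ip_le _ _)).
      apply: (le_trans (y := (1 + nsq (u n k - u m k)) * hnorm (u m k - lk k))).
        by apply: ler_wpM2r; [exact: hnorm_ge0 | exact: hna].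
      by apply: ler_wpM2l; [have := nsq_ge0 (u n k - u m k); lra | exact: hnb].
    have d2 : d ^+ 2 <= d by rewrite expr2; nra.
    have := nsq_ge0 (u n k - u m k); lra.
  have hsum : ps (fun k => u n k - lk k) M <= (1 + 2 * d) * ps (fun k => u n k - u m k) M + 3 * d * M%:R.
    rewrite /ps mulr_sumr mulr_natr.
    have -> : 3 * d *+ M = \sum_(k < M) (3 * d) by rewrite sumr_const card_ord.
    by rewrite -big_split /=; apply: ler_sum => k _; exact: hterm.
  have hps : ps (fun k => u n k - u m k) M <= e.
    have := ps_le_N (u n - u m) M; have := hN n m hn hm; lra.
  have h3 := ps_ge0 (fun k => u n k - u m k) M.
  move: hsum hps h3.
  set P := ps (fun k => u n k - lk k) M; set Q := ps (fun k => u n k - u m k) M => h1 h2 h3.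
  have : 2 * d * Q <= 2 * d * e by apply: ler_wpM2l; [lra|exact: h2].
  lra.
have hl : sqsum lk.
  have [N1 hN1] := est 1 ltr01.
  exists (2 * NN (u N1) + 2) => M.
  apply: (le_trans (y := 2 * ps (u N1) M + 2 * ps (fun k => u N1 k - lk k) M)).
    rewrite /ps !mulr_sumr -big_split /=; apply: ler_sum => k _.
    have := nsq_le2 (u N1 k) (lk k - u N1 k).
    by rewrite [u N1 k + _]addrC subrK (nsqBC (lk k)).
  have := ps_le_N (u N1) M; have := hN1 N1 (leqnn _) M; lra.
exists (L2 hl) => e e0.
have [N hN] := est (e ^+ 2 / 2) ltac:(by rewrite divr_gt0 ?exprn_gt0).
exists N => n hn; apply: sqrt_lt => //.
apply: (le_lt_trans (N_le (x := u n - L2 hl) (hN n hn))).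
have := exprn_gt0 2 e0; lra.
Qed.

Definition l2L : lmodType R[i] := l2 E.
Definition l2H : hilbert R :=
  @Hilbert R l2L (@l2ip R E) (@l2ip_linl R E) (@l2ip_conj R E) (@l2ip_ge0 R E)
    (@l2ip_eq0 R E) l2_complete.
End L2complete.

End MT6b.
Import MT6b.

Module MT7.
Set Implicit Arguments. Unset Strict Implicit. Unset Printing Implicit Defensive.
Local Open Scope ring_scope.
Local Open Scope complex_scope.

Section DS.
Variable R : realType.
Variables H G : hilbert R.
Definition dsT : lmodType R[i] := (H * G)%type.
Definition dsip (x y : dsT) : R[i] := hinner H x.1 y.1 + hinner G x.2 y.2.

Lemma dsip_linl a (x y z : dsT) : dsip (a *: x + y) z = a * dsip x z + dsip y z.
Proof. rewrite /dsip /= !hinnerDl; ring. Qed.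
Lemma dsip_conj (x y : dsT) : dsip y x = conjc (dsip x y).
Proof. by rewrite /dsip rmorphD /= -!ipC. Qed.
Lemma dsip_ge0 (x : dsT) : 0 <= dsip x x.
Proof. by rewrite /dsip addr_ge0 ?hinner_ge0. Qed.
Lemma dsip_Re (x : dsT) : cRe (dsip x x) = nsq x.1 + nsq x.2.
Proof. by rewrite /dsip ReD. Qed.
Lemma dsip_eq0 (x : dsT) : dsip x x = 0 -> x = 0.
Proof.
move=> e; have : cRe (dsip x x) = 0 by rewrite e.
rewrite dsip_Re => h; have := nsq_ge0 x.1; have := nsq_ge0 x.2 => h1 h2.
have e1 : nsq x.1 = 0 by lra.
have e2 : nsq x.2 = 0 by lra.
by case: x e1 e2 {e h h1 h2} => a b /= /nsq_eq0 -> /nsq_eq0 ->.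
Qed.

Lemma ds_complete (u : nat -> dsT) :
  (forall e, 0 < e -> exists N, forall m n, (N <= m)%N -> (N <= n)%N ->
     Num.sqrt (cRe (dsip (u m - u n) (u m - u n))) < e) ->
  exists l, forall e, 0 < e -> exists N, forall n, (N <= n)%N ->
     Num.sqrt (cRe (dsip (u n - l) (u n - l))) < e.
Proof.
move=> hc.
have hc2 : forall e, 0 < e -> exists N, forall m n, (N <= m)%N -> (N <= n)%N ->
    nsq (u m - u n).1 + nsq (u m - u n).2 < e.
  move=> e e0; have [N hN] := hc (Num.sqrt e) ltac:(by rewrite sqrtr_gt0).
  by exists N => m n hm hn; rewrite -dsip_Re; apply: sqrt_lt_inv => //; apply: hN.
have [l1 h1] : exists l, forall e, 0 < e -> exists N, forall n, (N <= n)%N -> nsq ((u n).1 - l) < e.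
  apply: complete_nsq => e e0; have [N hN] := hc2 e e0; exists N => m n hm hn.
  have := hN m n hm hn; have := nsq_ge0 (u m - u n).2.
  have -> : nsq (u m - u n).1 = nsq ((u m).1 - (u n).1) by []. lra.
have [l2 h2] : exists l, forall e, 0 < e -> exists N, forall n, (N <= n)%N -> nsq ((u n).2 - l) < e.
  apply: complete_nsq => e e0; have [N hN] := hc2 e e0; exists N => m n hm hn.
  have := hN m n hm hn; have := nsq_ge0 (u m - u n).1.
  have -> : nsq (u m - u n).2 = nsq ((u m).2 - (u n).2) by []. lra.
exists ((l1, l2) : dsT) => e e0.
have e2 : 0 < e ^+ 2 / 2 by rewrite divr_gt0 ?exprn_gt0.
have [N1 hN1] := h1 _ e2; have [N2 hN2] := h2 _ e2.
exists (maxn N1 N2) => n hn; apply: sqrt_lt => //; rewrite dsip_Re.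
have := hN1 n (leq_trans (leq_maxl _ _) hn); have := hN2 n (leq_trans (leq_maxr _ _) hn).
rewrite /=; lra.
Qed.

Definition DS : hilbert R := @Hilbert R dsT dsip dsip_linl dsip_conj dsip_ge0 dsip_eq0 ds_complete.

Lemma DS_ip (x y : DS) : hinner DS x y = hinner H x.1 y.1 + hinner G x.2 y.2.
Proof. by []. Qed.
Lemma DS_nsq (x : DS) : nsq x = nsq x.1 + nsq x.2.
Proof. exact: dsip_Re. Qed.
End DS.

End MT7.
Import MT7.

Module MT8.
Set Implicit Arguments. Unset Strict Implicit. Unset Printing Implicit Defensive.
Local Open Scope ring_scope.
Local Open Scope complex_scope.

Section Factor.
Variable R : realType.
Variable H : hilbert R.
Local Notation ip := (hinner H).
Definition pf (B : H -> H) x := cRe (ip (B x) x).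
Definition sa (B : H -> H) := forall x y, ip (B x) y = ip x (B y).
Definition posc (B : H -> H) := is_linear B /\ sa B /\ (forall x, 0 <= pf B x) /\ (forall x, pf B x <= nsq x).

Lemma pf_exp (B : H -> H) x y (t : R) : is_linear B -> sa B ->
  pf B (x + t%:C *: y) = pf B x + 2 * t * cRe (ip (B x) y) + t ^+ 2 * pf B y.
Proof.
move=> Bl Bs; rewrite /pf (linD Bl) (linZ Bl) !ipDl !ipDr !ReD !Re_ipZr !Re_ipZl.
have e : cRe (ip (B y) x) = cRe (ip (B x) y) by rewrite Bs Re_ipC.
rewrite e; ring.
Qed.

Lemma genCS (B : H -> H) : posc B -> forall x, nsq (B x) <= pf B x.
Proof.
move=> [Bl [Bs [B0 B1]]] x.
have h : cRe (ip (B x) (B x)) ^+ 2 <= pf B x * pf B (B x).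
  apply: quad_disc; last exact: B0.
  by move=> t; rewrite -pf_exp //; exact: B0.
have h2 := B1 (B x); have h3 := B0 x; have h4 := nsq_ge0 (B x).
move: h; rewrite -/(nsq (B x)) => h.
have : nsq (B x) ^+ 2 <= pf B x * nsq (B x).
  apply: (le_trans h); apply: ler_wpM2l => //.
rewrite expr2 => h5; nra.
Qed.

Definition Bnext (B : H -> H) := fun x => B x - B (B x).

Lemma posc_next B : posc B -> posc (Bnext B).
Proof.
move=> hB; have hcs := genCS hB; move: hB => [Bl [Bs [B0 B1]]].
have pn : forall x, pf (Bnext B) x = pf B x - nsq (B x).
  move=> x; by rewrite /pf /Bnext ipBl ReD ReN (Bs (B x)).
split; [|split; [|split]].
- by move=> a x y; rewrite /Bnext !Bl scalerBr opprD addrACA.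
- by move=> x y; rewrite /Bnext ipBl ipBr Bs Bs (Bs x).
- by move=> x; rewrite pn subr_ge0.
- move=> x; rewrite pn; have := nsq_ge0 (B x); have := B1 x; lra.
Qed.

Lemma pf_next B : posc B -> forall x, pf (Bnext B) x = pf B x - nsq (B x).
Proof.
move=> [Bl [Bs _]] x; by rewrite /pf /Bnext ipBl ReD ReN (Bs (B x)).
Qed.

Fixpoint Bk (B : H -> H) (k : nat) : H -> H :=
  match k with 0 => B | k'.+1 => Bnext (Bk B k') end.

Lemma posc_Bk B k : posc B -> posc (Bk B k).
Proof. move=> hB; elim: k => [|k IH] //=; exact: posc_next. Qed.

Lemma ps_Bk B x N : posc B -> ps (fun k => Bk B k x) N = pf B x - pf (Bk B N) x.
Proof.
move=> hB; elim: N => [|N IH]; first by rewrite /ps big_ord0 /= subrr.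
rewrite psS IH /= (pf_next (posc_Bk N hB)); ring.
Qed.

Lemma sqsum_Bk B x : posc B -> sqsum (fun k => Bk B k x).
Proof.
move=> hB; exists (pf B x) => N; rewrite ps_Bk //.
have [_ [_ [h _]]] := posc_Bk N hB; have := h x; lra.
Qed.

Lemma conv_shift (u : nat -> R) l : conv u l -> conv (fun n => u n.+1) l.
Proof. by move=> h e e0; have [N hN] := h e e0; exists N => n hn; apply: hN; exact: leqW. Qed.

Definition Dvec B (hB : posc B) (x : H) : l2H H := L2 (sqsum_Bk x hB).

Lemma nsq_Dvec B (hB : posc B) x : nsq (Dvec hB x) = pf B x.
Proof.
change (cRe (@l2ip R H (Dvec hB x) (Dvec hB x)) = pf B x); rewrite l2ip_self_Re.
have [C hC] := sqsum_Bk x hB.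
have hm := @ps_mono _ _ (fun k => Bk B k x).
have [L hL] := mono_conv_ex hm hC.
rewrite (limrE hL).
have psL : forall N, ps (fun k => Bk B k x) N <= L.
  by move=> N; rewrite -(limrE hL); exact: (mono_limr_ub hm hC).
have Lle : L <= pf B x.
  apply: (conv_ub _ hL) => N; rewrite ps_Bk //.
  have [_ [_ [h _]]] := posc_Bk N hB; have := h x; lra.
set m := pf B x - L.
have m0 : 0 <= m by rewrite /m subr_ge0.
have mle : forall N, m <= pf (Bk B N) x.
  by move=> N; have := psL N; rewrite ps_Bk // /m; lra.
have hz : conv (fun N => nsq (Bk B N x)) 0.
  apply: (conv_ext (u := fun N => ps (fun k => Bk B k x) N.+1 - ps (fun k => Bk B k x) N)).
    by move=> N; rewrite psS; ring.
  by rewrite -(subrr L); apply: convB => //; exact: conv_shift.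
have hz2 : conv (fun N => nsq x * nsq (Bk B N x)) 0.
  by rewrite -(mulr0 (nsq x)); exact: convZ.
have : m ^+ 2 <= 0.
  apply: (conv_lb _ hz2) => N.
  apply: (le_trans (y := pf (Bk B N) x ^+ 2)).
    by rewrite !expr2; have := mle N; nra.
  by rewrite mulrC; exact: CS.
have := sqr_ge0 m => h1 h2; have : m = 0 by nra.
rewrite /m => h; lra.
Qed.

Lemma Dvec_lin B (hB : posc B) : is_linear (Dvec hB).
Proof.
move=> a x y; apply: l2_ext => k /=.
by have [Bl _] := posc_Bk k hB; rewrite Bl.
Qed.
End Factor.

Section Factor2.
Variable R : realType.
Variable H : hilbert R.
Local Notation ip := (hinner H).

Lemma factor (Dl : H -> H) (c : R) : is_linear Dl -> sa Dl -> (forall x, 0 <= pf Dl x) ->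
  (forall x, pf Dl x <= c * nsq x) ->
  exists Y : H -> l2H H, is_linear Y /\ forall x, nsq (Y x) = pf Dl x.
Proof.
move=> Ll Ls Lp Lb.
set s := `|c| + 1.
have s0 : 0 < s by rewrite /s; have := normr_ge0 c; lra.
pose A := fun x => (s^-1)%:C *: Dl x.
have pfA : forall x, pf A x = s^-1 * pf Dl x by move=> x; rewrite /pf /A Re_ipZl.
have hA : posc A.
  split; [|split; [|split]].
  - move=> a x y; rewrite /A Ll scalerDr !scalerA; congr (_ + _); by rewrite mulrC.
  - move=> x y; rewrite /A ipZl ipZr conjC_real Ls; by [].
  - by move=> x; rewrite pfA mulr_ge0 ?invr_ge0 ?Lp ?ltW.
  - move=> x; rewrite pfA ler_pdivrMl //.
    apply: (le_trans (Lb x)); rewrite /s.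
    have := nsq_ge0 x; have := ler_norm c; have := normr_ge0 c => h1 h2 h3.
    set n := nsq x; nra.
exists (fun x => (Num.sqrt s)%:C *: Dvec hA x); split.
  move=> a x y; rewrite Dvec_lin scalerDr !scalerA; congr (_ + _); by rewrite mulrC.
move=> x; rewrite nsqZr nsq_Dvec pfA sqr_sqrtr ?ltW // mulrA mulfV ?mul1r //.
by rewrite gt_eqF.
Qed.
End Factor2.

End MT8.
Import MT8.

Module MT9.
Set Implicit Arguments. Unset Strict Implicit. Unset Printing Implicit Defensive.
Local Open Scope ring_scope.
Local Open Scope complex_scope.

Section L2more.
Variable R : realType.
Variable E : hilbert R.
Local Notation ip := (hinner E).

Lemma conv_unshift (u : nat -> R) l : conv (fun n => u n.+1) l -> conv u l.
Proof.
move=> h e e0; have [N hN] := h e e0; exists N.+1 => n hn.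
by case: n hn => // n hn; apply: hN.
Qed.

Lemma l2_nsq_conv (x : l2H E) : conv (ps x) (nsq x).
Proof.
have [l hl] := ps_conv x.
have -> : nsq x = limr (ps x) by [].
by rewrite (limrE hl).
Qed.

Lemma l2_ipE (x y : l2H E) : hinner (l2H E) x y = limr (rps x y) +i* limr (ips x y).
Proof. by []. Qed.

Lemma l2_ip_zero (x y : l2H E) : (forall j, ip (x j) (y j) = 0) -> hinner (l2H E) x y = 0.
Proof.
move=> h; rewrite l2_ipE; apply: complex_ext => /=.
  apply: limrE; apply: (conv_ext (u := fun _ => 0)); last exact: conv_cst.
  by move=> N; rewrite /rps big1 // => k _; rewrite h.
apply: limrE; apply: (conv_ext (u := fun _ => 0)); last exact: conv_cst.
by move=> N; rewrite /ips big1 // => k _; rewrite h.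
Qed.

Lemma l2_ip_first (x y : l2H E) : (forall j, ip (x j.+1) (y j.+1) = 0) ->
  hinner (l2H E) x y = ip (x 0%N) (y 0%N).
Proof.
move=> h; rewrite l2_ipE; apply: complex_ext => /=.
  apply: limrE; apply: conv_unshift; apply: (conv_ext (u := fun _ => cRe (ip (x 0%N) (y 0%N)))); last exact: conv_cst.
  by move=> N; rewrite /rps big_ord_recl /= big1 ?addr0 // => k _; rewrite h.
apply: limrE; apply: conv_unshift; apply: (conv_ext (u := fun _ => cIm (ip (x 0%N) (y 0%N)))); last exact: conv_cst.
by move=> N; rewrite /ips big_ord_recl /= big1 ?addr0 // => k _; rewrite h.
Qed.

Lemma l2_ip_shift (x y x' y' : l2H E) : ip (x 0%N) (y 0%N) = 0 ->
  (forall j, ip (x j.+1) (y j.+1) = ip (x' j) (y' j)) ->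
  hinner (l2H E) x y = hinner (l2H E) x' y'.
Proof.
move=> h0 h; rewrite !l2_ipE; apply: complex_ext => /=.
  apply: limrE; apply: conv_unshift.
  apply: (conv_ext (u := rps x' y')); last by apply: limrP; exact: rps_conv.
  by move=> N; rewrite /rps big_ord_recl /= h0 Re0 add0r; apply: eq_bigr => k _; rewrite h.
apply: limrE; apply: conv_unshift.
apply: (conv_ext (u := ips x' y')); last by apply: limrP; exact: ips_conv.
by move=> N; rewrite /ips big_ord_recl /= h0 Im0 add0r; apply: eq_bigr => k _; rewrite h.
Qed.
End L2more.

Section AdjMore.
Variable R : realType.
Variables H1 H2 : hilbert R.

Lemma adjoint_unique (A : H1 -> H2) S1 S2 : is_adjoint A S1 -> is_adjoint A S2 ->
  forall y, S1 y = S2 y.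
Proof. move=> h1 h2 y; apply: ip_ext => x; by rewrite -h1 -h2. Qed.

Lemma adjointE (A : H1 -> H2) S : is_linear A -> is_bounded A -> is_adjoint A S ->
  forall y, adjoint A y = S y.
Proof. move=> Al Ab h; apply: adjoint_unique h; exact: adjointP. Qed.

Lemma adjoint_left (A : H1 -> H2) S : is_adjoint A S -> forall y x, hinner H1 (S y) x = hinner H2 y (A x).
Proof. by move=> h y x; rewrite ipC -h -ipC. Qed.
End AdjMore.

Section TwoIso.
Variable R : realType.
Variable K : hilbert R.
Local Notation ip := (hinner K).

Lemma two_iso_norm (S : K -> K) Ss : is_adjoint S Ss ->
  (forall x, Ss (Ss (S (S x))) - 2%:R *: Ss (S x) + x = 0) ->
  forall x, nsq (S (S x)) - 2 * nsq (S x) + nsq x = 0.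
Proof.
move=> hS h x; have := congr1 (fun v => cRe (ip v x)) (h x).
rewrite /= ip0l !ipDl ipNl ipZl !(adjoint_left hS) !ReD ReN ReM Re_nat Im_nat mul0r subr0.
by rewrite /nsq.
Qed.

Lemma norm_two_iso (S : K -> K) Ss : is_linear S -> is_adjoint S Ss ->
  (forall x, nsq (S (S x)) - 2 * nsq (S x) + nsq x = 0) ->
  forall x, Ss (Ss (S (S x))) - 2%:R *: Ss (S x) + x = 0.
Proof.
move=> Sl hS h x.
set F := fun y => ip y (Ss (Ss (S (S x))) - 2%:R *: Ss (S x) + x).
have FE : forall y, F y = ip (S (S y)) (S (S x)) - 2%:R * ip (S y) (S x) + ip y x.
  move=> y; rewrite /F !ipDr ipNr ipZr -!hS.
  by rewrite conjc_nat.
have ReF : forall y, cRe (F y) = 0.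
  move=> y; have := h (y + x); rewrite !(linD Sl) !nsqD.
  rewrite FE !ReD ReN ReM Re_nat Im_nat mul0r subr0.
  have := h y; have := h x; lra.
have F0 : forall y, F y = 0.
  move=> y; apply: complex_ext; first by rewrite ReF.
  have := ReF ('i *: y); rewrite /F ipZl ReM Rei Imi mul0r sub0r mul1r => e.
  by rewrite Im0 -[cIm _]opprK e oppr0.
by apply: hinner_eq0; have := F0 (Ss (Ss (S (S x))) - 2%:R *: Ss (S x) + x).
Qed.
End TwoIso.

End MT9.
Import MT9.

Module MT10.
Set Implicit Arguments. Unset Strict Implicit. Unset Printing Implicit Defensive.
Local Open Scope ring_scope.
Local Open Scope complex_scope.

Section Constr.
Variable R : realType.
Variable H : hilbert R.
Variable T : bop H H.
Hypothesis hconv : convex_op T.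
Variable M : R.
Hypothesis hM : forall n : nat, opnorm (iter n T) ^+ 2 / (n.+1)%:R <= M.
Local Notation ip := (hinner H).

Let Tl := bop_linear T.
Let Tb := bop_bounded T.
Let TsP : is_adjoint T (adjoint T) := adjointP Tl Tb.

Definition Dl x := adjoint T (adjoint T (T (T x))) - 2%:R *: adjoint T (T x) + x.

Lemma Dl_ip x y : ip (Dl x) y = ip (T (T x)) (T (T y)) - 2%:R * ip (T x) (T y) + ip x y.
Proof. by rewrite /Dl !ipDl ipNl ipZl !(adjoint_left TsP). Qed.

Lemma Dl_lin : is_linear Dl.
Proof.
move=> a x y; apply: ip_extl => z.
rewrite Dl_ip [RHS]ipDl ipZl !Dl_ip !(linD Tl) !(linZ Tl) !ipDl !ipZl; ring.
Qed.

Lemma Dl_sa : sa Dl.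
Proof.
move=> x y; rewrite [RHS]ipC !Dl_ip conj_form -!ipC.
by [].
Qed.

Lemma pfDl x : pf Dl x = nsq (T (T x)) - 2 * nsq (T x) + nsq x.
Proof. by rewrite /pf Dl_ip !ReD ReN ReM Re_nat Im_nat mul0r subr0. Qed.

Lemma pfDl_ge0 x : 0 <= pf Dl x.
Proof. by have := hconv x; rewrite lecE => /andP[_]. Qed.

Lemma pfDl_le : exists c, forall x, pf Dl x <= c * nsq x.
Proof.
have [C [C0 hC]] := bounded_nsq Tb.
exists (C * C + 1) => x; rewrite pfDl.
have h1 := hC (T x); have h2 := hC x; have h3 := nsq_ge0 (T x).
have : C * nsq (T x) <= C * (C * nsq x) by apply: ler_wpM2l.
lra.
Qed.

Definition Ypack := cid (factor Dl_lin Dl_sa pfDl_ge0 (projT2 (cid pfDl_le))).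
Definition Y := projT1 Ypack.
Lemma Y_lin : is_linear Y. Proof. exact: (proj1 (projT2 Ypack)). Qed.
Lemma nsqY x : nsq (Y x) = pf Dl x. Proof. exact: (proj2 (projT2 Ypack)). Qed.

Definition an h n := nsq (iter n T h).

Lemma an_le h n : an h n <= `|M| * n.+1%:R * nsq h.
Proof.
have Til := iter_linear n Tl; have Tib := iter_bounded n Tb.
have h1 := opnorm_ub Til Tib h; have h0 := opnorm_ge0 Tib.
have h2 : an h n <= opnorm (iter n T) ^+ 2 * nsq h.
  rewrite /an -!sqr_hnorm -exprMn; have := hnorm_ge0 (iter n T h).
  move=> g; rewrite !expr2; nra.
apply: (le_trans h2); apply: ler_wpM2r; first exact: nsq_ge0.
have := hM n; rewrite ler_pdivrMr ?ltr0Sn // => h3.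
apply: (le_trans h3); apply: ler_wpM2r; [exact: ler0n|exact: ler_norm].
Qed.

Definition dn h n := an h n.+1 - an h n.

Lemma pf_iter h n : pf Dl (iter n T h) = dn h n.+1 - dn h n.
Proof. rewrite pfDl /dn /an /=; ring. Qed.

Lemma dn_mono h n : dn h n <= dn h n.+1.
Proof. by rewrite -subr_ge0 -pf_iter pfDl_ge0. Qed.

Lemma sum_pf h N : \sum_(n < N) pf Dl (iter n T h) = dn h N - dn h 0.
Proof.
elim: N => [|N IH]; first by rewrite big_ord0 subrr.
by rewrite big_ord_recr /= IH pf_iter; ring.
Qed.

Lemma sum_dn h N m : \sum_(k < m) dn h (N + k) = an h (N + m) - an h N.
Proof.
elim: m => [|m IH]; first by rewrite big_ord0 addn0 subrr.
by rewrite big_ord_recr /= IH /dn addnS; ring.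
Qed.

Lemma an_ge0 h n : 0 <= an h n. Proof. exact: nsq_ge0. Qed.

Lemma dn_le h N : dn h N <= 3 * `|M| * nsq h.
Proof.
have hM0 := normr_ge0 M; have hh := nsq_ge0 h.
case: N => [|N].
  rewrite /dn; have := an_le h 1; have := an_ge0 h 0.
  rewrite [X in X * nsq h]mulrC.
  have : `|M| * nsq h * 2%:R <= `|M| * nsq h * 3 by apply: ler_wpM2l; [exact: mulr_ge0|lra].
  rewrite -!mulrA [2%:R * _]mulrC. lra.
set n := N.+1.
have key : n%:R * dn h n <= `|M| * (n + n).+1%:R * nsq h.
  apply: (le_trans (y := \sum_(k < n) dn h (n + k))).
    have -> : n%:R * dn h n = \sum_(k < n) dn h n by rewrite sumr_const card_ord mulr_natl.
    apply: ler_sum => k _; apply: (mono_le (u := dn h)); first exact: dn_mono.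
    exact: leq_addr.
  rewrite sum_dn; have := an_ge0 h n; have := an_le h (n + n); lra.
have n1 : 1 <= n%:R :> R by rewrite ler1n.
have e : (n + n).+1%:R = 2 * n%:R + 1 :> R by rewrite -addn1 !natrD; ring.
rewrite e in key.
have : n%:R * dn h n <= n%:R * (3 * `|M| * nsq h).
  apply: (le_trans key).
  have : 0 <= `|M| * nsq h by exact: mulr_ge0.
  set q := `|M| * nsq h => q0.
  have -> : `|M| * (2 * n%:R + 1) * nsq h = (2 * n%:R + 1) * q by rewrite /q; ring.
  have -> : n%:R * (3 * `|M| * nsq h) = 3 * n%:R * q by rewrite /q; ring.
  apply: ler_wpM2r => //; lra.
by rewrite ler_pM2l //; lra.
Qed.

Definition Cq := 3 * `|M| + 1.

Lemma q_le h N : \sum_(n < N) pf Dl (iter n T h) <= Cq * nsq h.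
Proof.
rewrite sum_pf; have := dn_le h N; rewrite /dn /Cq /an /=.
have := nsq_ge0 (T h); lra.
Qed.

Lemma ps_Z_le h N : ps (fun n => Y (iter n T h)) N <= Cq * nsq h.
Proof.
rewrite /ps.
have -> : \sum_(k < N) nsq (Y (iter k T h)) = \sum_(k < N) pf Dl (iter k T h).
  by apply: eq_bigr => k _; rewrite nsqY.
exact: q_le.
Qed.

Lemma sqsum_Z h : sqsum (fun n => Y (iter n T h)).
Proof. by exists (Cq * nsq h) => N; exact: ps_Z_le. Qed.

Definition L : hilbert R := l2H (l2H H).
Definition Z h : L := L2 (sqsum_Z h).

Lemma Z_lin : is_linear Z.
Proof.
move=> a x y; apply: l2_ext => k /=.
by rewrite (iter_linear k Tl) Y_lin.
Qed.

Lemma nsqZ_le h : nsq (Z h) <= Cq * nsq h.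
Proof. by apply: N_le => N; exact: ps_Z_le. Qed.


Lemma nsqZ_rec h : nsq (Z h) = pf Dl h + nsq (Z (T h)).
Proof.
have h1 := conv_shift (l2_nsq_conv (Z h)).
have h2 : conv (fun N => pf Dl h + ps (Z (T h)) N) (pf Dl h + nsq (Z (T h))).
  by apply: convD; [exact: conv_cst | exact: l2_nsq_conv].
apply: (conv_uniq h1); apply: (conv_ext _ h2) => N.
rewrite /ps big_ord_recl /= nsqY; congr (_ + _).
by apply: eq_bigr => k _ /=; rewrite -iterSr.
Qed.

Definition G : hilbert R := l2H L.

Lemma sqsum_X h : sqsum (fun j => if j is 0 then Z h else (0 : L)).
Proof.
exists (nsq (Z h)) => N; case: N => [|N]; first by rewrite /ps big_ord0 nsq_ge0.
rewrite /ps big_ord_recl /= big1 ?addr0 // => k _; exact: nsq0.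
Qed.
Definition X h : G := L2 (sqsum_X h).

Lemma sqsum_V (g : G) : sqsum (fun j => if j is j'.+1 then g j' else (0 : L)).
Proof.
have [C hC] := l2P g; exists C => N; case: N => [|N].
  by rewrite /ps big_ord0; apply: (le_trans (ps_ge0 g 0)); exact: hC.
rewrite /ps big_ord_recl /= nsq0 add0r; exact: hC.
Qed.
Definition V (g : G) : G := L2 (sqsum_V g).

Lemma X_lin : is_linear X.
Proof.
move=> a x y; apply: l2_ext => k /=; case: k => [|k] /=; first by rewrite Z_lin.
by rewrite scaler0 addr0.
Qed.
Lemma V_lin : is_linear V.
Proof.
move=> a x y; apply: l2_ext => k /=; case: k => [|k] //=.
by rewrite scaler0 addr0.
Qed.

Lemma ipXV h g : hinner G (X h) (V g) = 0.
Proof. by apply: l2_ip_zero => -[|j]; [exact: (ip0r (Z h)) | exact: (ip0l (g j))]. Qed.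
Lemma ipVV g g' : hinner G (V g) (V g') = hinner G g g'.
Proof. by apply: l2_ip_shift => [|j] //; exact: (ip0l (0 : L)). Qed.
Lemma nsqX h : nsq (X h) = nsq (Z h).
Proof. by rewrite /nsq (l2_ip_first (x := X h) (y := X h)) // => j; exact: (ip0l (0 : L)). Qed.
Lemma nsqV g : nsq (V g) = nsq g.
Proof. by rewrite /nsq ipVV. Qed.
Lemma nsqXV h g : nsq (X h + V g) = nsq (Z h) + nsq g.
Proof. by rewrite nsqD ipXV Re0 mulr0 addr0 nsqX nsqV. Qed.

Definition K : hilbert R := DS H G.
Definition Sf (k : K) : K := (T k.1, X k.1 + V k.2).

Lemma Sf_lin : is_linear Sf.
Proof.
move=> a x y; rewrite /Sf /=; congr (_, _).
  exact: Tl.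
change (X (a *: x.1 + y.1) + V (a *: x.2 + y.2) = a *: (X x.1 + V x.2) + (X y.1 + V y.2)).
by rewrite X_lin V_lin scalerDr addrACA.
Qed.

Lemma nsq_Sf k : nsq (Sf k) = nsq (T k.1) + (nsq (Z k.1) + nsq k.2).
Proof. by rewrite DS_nsq /= nsqXV. Qed.

Lemma Sf_bnd : is_bounded Sf.
Proof.
have [C [C0 hC]] := bounded_nsq Tb.
apply: (@nsq_bounded _ _ _ _ (C + Cq + 1)) => k.
rewrite nsq_Sf DS_nsq; have := hC k.1; have := nsqZ_le k.1.
have := nsq_ge0 k.1; have := nsq_ge0 k.2; have := normr_ge0 M; rewrite /Cq.
move=> a b c d e; nra.
Qed.

Definition S : bop K K := Bop Sf_lin Sf_bnd.


Lemma S_apply k : S k = (T k.1, X k.1 + V k.2).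
Proof. by []. Qed.

Definition Jf (h : H) : K := (h, 0).
Lemma Jf_lin : is_linear Jf.
Proof.
move=> a x y; rewrite /Jf /=; congr (_, _).
by change ((0 : G) = a *: (0 : G) + 0); rewrite scaler0 addr0.
Qed.
Lemma Jf_ip x y : hinner K (Jf x) (Jf y) = hinner H x y.
Proof. rewrite DS_ip; change (hinner H x y + hinner G 0 0 = hinner H x y); by rewrite ip0l addr0. Qed.
Lemma Jf_bnd : is_bounded Jf.
Proof.
apply: (@nsq_bounded _ _ _ _ 1) => x; rewrite DS_nsq.
by change (nsq x + nsq (0 : G) <= 1 * nsq x); rewrite nsq0 addr0 mul1r.
Qed.
Lemma Jadj : is_adjoint Jf (fun k : K => k.1).
Proof.
move=> x k; rewrite DS_ip.
by change (hinner H x k.1 + hinner G 0 k.2 = hinner H x k.1); rewrite ip0l addr0.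
Qed.

Lemma constr : exists (K0 : hilbert R) (J : H -> K0) (S0 : bop K0 K0),
  [/\ lifting_via J T S0, two_isometry S0 & orth_compl_in_ker J S0].
Proof.
have hS := adjointP Sf_lin Sf_bnd.
exists K, Jf, S; split.
- split; first by split; [exact: Jf_lin | exact: Jf_ip].
  by move=> k; rewrite !(adjointE Jf_lin Jf_bnd Jadj).
- move=> x; apply: (norm_two_iso (S := Sf)); [exact: Sf_lin | exact: hS |].
  move=> k; rewrite !nsq_Sf DS_nsq /= nsqXV (nsqZ_rec k.1) pfDl; lra.
- move=> k hk.
  have k1 : k.1 = 0.
    apply: hinner_eq0; have := hk k.1; rewrite DS_ip.
    by change (hinner H k.1 k.1 + hinner G k.2 0 = 0 -> hinner H k.1 k.1 = 0); rewrite ip0r addr0.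
  apply/eqP; rewrite subr_eq0; apply/eqP; apply: ip_ext => y.
  rewrite -(hS y (S k)).
  change (hinner K (S y) (S k) = hinner K y k).
  rewrite !S_apply !DS_ip.
  change (hinner H (T y.1) (T k.1) + hinner G (X y.1 + V y.2) (X k.1 + V k.2) =
          hinner H y.1 k.1 + hinner G y.2 k.2).
  rewrite k1 (lin0 Tl) (lin0 X_lin) !ip0r !add0r.
  by rewrite ipDl ipXV add0r ipVV.
Qed.
End Constr.

End MT10.

Module MT11.
Set Implicit Arguments. Unset Strict Implicit. Unset Printing Implicit Defensive.
Local Open Scope ring_scope.
Local Open Scope complex_scope.

Section Bound.
Variable R : realType.
Variable H : hilbert R.
Variable T : bop H H.

Lemma lift_bound : (exists (K : hilbert R) (J : H -> K) (S : bop K K),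
    lifting_via J T S /\ two_isometry S) ->
  exists M : R, forall n : nat, opnorm (iter n T) ^+ 2 / (n.+1)%:R <= M.
Proof.
move=> [K [J [S [[[Jl Jip] Hlift] h2]]]].
have nJ : forall x, nsq (J x) = nsq x by move=> x; rewrite /nsq Jip.
have Jb : is_bounded J by apply: (@nsq_bounded _ _ _ _ 1) => x; rewrite nJ mul1r.
have JsP := adjointP Jl Jb.
set Js := adjoint J in JsP.
have Jinj : forall a b, J a = J b -> a = b.
  move=> a b e; apply/eqP; rewrite -subr_eq0; apply/eqP; apply: nsq_eq0.
  by rewrite -nJ (linB Jl) e subrr nsq0.
have TJs : forall k, T (Js k) = Js (S k) by move=> k; apply: Jinj; exact: Hlift.
have JsJ : forall h, Js (J h) = h by move=> h; apply: ip_ext => x; rewrite -JsP Jip.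
have itJs : forall n k, iter n T (Js k) = Js (iter n S k).
  by move=> n k; elim: n => [|n IH] //=; rewrite IH TJs.
have Jsc : forall k, nsq (Js k) <= nsq k.
  move=> k.
  have e1 : nsq (Js k) = cRe (hinner K (J (Js k)) k) by rewrite /nsq JsP.
  have h1 := Re_ip_le (J (Js k)) k.
  have e2 : hnorm (J (Js k)) = hnorm (Js k) by rewrite !hnormE nJ.
  rewrite -e1 e2 -sqr_hnorm in h1.
  have h3 : hnorm (Js k) <= hnorm k.
    have := hnorm_ge0 (Js k); have := hnorm_ge0 k; nra.
  rewrite -!sqr_hnorm; have := hnorm_ge0 (Js k); nra.
have Sl := bop_linear S; have Sb := bop_bounded S.
have hn := two_iso_norm (adjointP Sl Sb) h2.
have [Cs [Cs0 hCs]] := bounded_nsq Sb.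
have bstep : forall k n, nsq (iter n.+1 S k) - nsq (iter n S k) = nsq (S k) - nsq k.
  move=> k; elim=> [|n IH] //=.
  have := hn (iter n S k); rewrite /= in IH *; lra.
have bform : forall k n, nsq (iter n S k) = nsq k + n%:R * (nsq (S k) - nsq k).
  move=> k; elim=> [|n IH]; first by rewrite mul0r addr0.
  have := bstep k n; rewrite -[n.+1]addn1 natrD; lra.
have bbound : forall k n, nsq (iter n S k) <= n.+1%:R * (1 + Cs) * nsq k.
  move=> k n; rewrite bform; have := hCs k; have := nsq_ge0 k; have := nsq_ge0 (S k).
  have := ler0n R n; rewrite -addn1 natrD; nra.
exists (1 + Cs) => n.
have hb : forall h, hnorm (iter n T h) <= Num.sqrt (n.+1%:R * (1 + Cs)) * hnorm h.
  move=> h; rewrite !hnormE -sqrtrM; last by rewrite mulr_ge0 ?ler0n //; lra.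
  rewrite ler_sqrt; last by rewrite !mulr_ge0 ?ler0n ?nsq_ge0 //; lra.
  rewrite -(JsJ h) itJs JsJ; apply: (le_trans (Jsc _)); rewrite -(nJ h).
  exact: bbound.
have Tib := iter_bounded n (bop_bounded T).
have h0 := opnorm_ge0 Tib.
have := opnorm_le (sqrtr_ge0 _) hb => hle.
rewrite ler_pdivrMr ?ltr0Sn //.
have : opnorm (iter n T) ^+ 2 <= (Num.sqrt (n.+1%:R * (1 + Cs))) ^+ 2.
  by rewrite ler_pXn2r // ?nnegrE ?sqrtr_ge0.
rewrite sqr_sqrtr; last by rewrite mulr_ge0 ?ler0n //; lra.
by rewrite mulrC.
Qed.
End Bound.

End MT11.

Unset Implicit Arguments.

Theorem theorem3p2 (R : realType) (H : hilbert R) (T : bop H H) :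
  convex_op T ->
  [/\ ((exists (K : hilbert R) (J : H -> K) (S : bop K K),
          lifting_via J T S /\ two_isometry S) <->
       (exists (K : hilbert R) (J : H -> K) (S : bop K K),
          [/\ lifting_via J T S, two_isometry S & orth_compl_in_ker J S])),
      ((exists (K : hilbert R) (J : H -> K) (S : bop K K),
          [/\ lifting_via J T S, two_isometry S & orth_compl_in_ker J S]) <->
       (exists M : R, forall n : nat,
          opnorm (iter n T) ^+ 2 / (n.+1)%:R <= M))
    & ((exists M : R, forall n : nat,
          opnorm (iter n T) ^+ 2 / (n.+1)%:R <= M) <->
       (exists (K : hilbert R) (J : H -> K) (S : bop K K),
          lifting_via J T S /\ two_isometry S))].
Proof.
move=> hc.
have i_iii := @MT11.lift_bound R H T.
have iii_ii : (exists M : R, forall n : nat, opnorm (iter n T) ^+ 2 / (n.+1)%:R <= M) ->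
  (exists (K : hilbert R) (J : H -> K) (S : bop K K),
          [/\ lifting_via J T S, two_isometry S & orth_compl_in_ker J S]).
  by move=> [M hM]; exact: (MT10.constr hc hM).
have ii_i : (exists (K : hilbert R) (J : H -> K) (S : bop K K),
          [/\ lifting_via J T S, two_isometry S & orth_compl_in_ker J S]) ->
  (exists (K : hilbert R) (J : H -> K) (S : bop K K), lifting_via J T S /\ two_isometry S).
  by move=> [K [J [S [a b _]]]]; exists K, J, S.
split; split => h.
- exact: iii_ii (i_iii h).
- exact: ii_i h.
- exact: i_iii (ii_i h).
- exact: iii_ii h.
- exact: ii_i (iii_ii h).
- exact: i_iii h.
Qed.
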